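(* Let $B$ and $k$ be positive integers and let $G=(V,E)$ be a graph with $m=|E|$ edges and maximum degree at most $B$. If $G$ has a vertex cover with at most $m/B+k$ vertices, then there exists a set $D\subseteq E$ with $|D|\le kB$ such that the graph $G-D=(V,E\setminus D)$ is bipartite.
   Context: A vertex cover of a graph $G=(V,E)$ is a set $C\subseteq V$ such that every edge of $G$ has at least one endpoint in $C$. *)

(* Defs.v *)
From HB Require Import structures.
From mathcomp Require Import all_boot all_order all_algebra.
Set Implicit Arguments. Unset Strict Implicit. Unset Printing Implicit Defensive.

(* A simple graph on the finite vertex type T is given by its edge set
   E : {set {set T}}, where every edge is a 2-element subset of T. *)
Definition simple_graph (T : finType) (E : {set {set T}}) : Prop :=
  forall e, e \in E -> #|e| = 2.

Definition degree (T : finType) (E : {set {set T}}) (v : T) : nat :=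
  #|[set e in E | v \in e]|.

Definition max_degree_le (T : finType) (E : {set {set T}}) (B : nat) : Prop :=
  forall v : T, degree E v <= B.

Definition vertex_cover (T : finType) (E : {set {set T}}) (C : {set T}) : Prop :=
  forall e, e \in E -> exists2 v, v \in e & v \in C.

Definition bipartite (T : finType) (E : {set {set T}}) : Prop :=
  exists col : T -> bool,
    forall e, e \in E -> forall u v, u \in e -> v \in e -> u != v -> col u != col v.

(* Main.v *)
Require Import Defs.
From mathcomp Require Import all_boot all_order all_algebra.
Import Order.TTheory GRing.Theory Num.Theory.

Lemma card_cnt (T : finType) (A : {set T}) (P : pred T) :
  #|[set x in A | P x]| = \sum_(x in A) (P x : nat).
Proof.
rewrite -sum1_card big_mkcond [RHS]big_mkcond /=.
apply: eq_bigr => x _; rewrite inE; by case: (x \in A); case: (P x).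
Qed.

Lemma two_set (T : finType) (e : {set T}) u v :
  #|e| = 2 -> u \in e -> v \in e -> u != v -> e = [set u; v].
Proof.
move=> he hu hv huv; apply/esym/eqP; rewrite eqEcard he cards2 huv leqnn andbT.
by apply/subsetP => x; rewrite !inE => /orP [] /eqP ->.
Qed.

Theorem lemma2 (T : finType) (E : {set {set T}}) (B k : nat)
  (hB : (0 < B)%N) (hk : (0 < k)%N)
  (hG : simple_graph E) (hdeg : max_degree_le E B)
  (hC : exists C : {set T}, vertex_cover E C /\
          ((#|C|%:R : rat) <= (#|E|%:R : rat) / (B%:R : rat) + (k%:R : rat))%R) :
  exists D : {set {set T}}, D \subset E /\ (#|D| <= k * B)%N /\ bipartite (E :\: D).
Proof.
case: hC => C [hvc hle].
have hCB : (#|C| * B <= #|E| + k * B)%N.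
  have hB0 : ((0 : rat) < B%:R)%R by rewrite ltr0n.
  rewrite -(ler_nat rat) natrM natrD natrM.
  have := ler_wpM2r (ltW hB0) hle.
  by rewrite mulrDl divfK ?gt_eqF.
set D := [set e in E | e \subset C].
exists D; split; first by apply/subsetP => e; rewrite inE => /andP [].
split.
  have dc : (\sum_(v in C) degree E v = \sum_(e in E) #|e :&: C|)%N.
    rewrite /degree.
    under eq_bigr => v _ do rewrite card_cnt.
    rewrite exchange_big /=; apply: eq_bigr => e _.
    rewrite -card_cnt; apply: eq_card => x; by rewrite !inE [RHS]andbC.
  have up : (\sum_(v in C) degree E v <= #|C| * B)%N.
    rewrite -sum1_card big_distrl /=; apply: leq_sum => v _; rewrite mul1n; exact: hdeg.
  have lo : (#|E| + #|D| <= \sum_(e in E) #|e :&: C|)%N.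
    rewrite /D card_cnt -sum1_card -big_split /=.
    apply: leq_sum => f hE; case hs: (f \subset C).
      by rewrite (setIidPl hs) (hG f hE).
    case: (hvc f hE) => w hw hwC; rewrite addn0 card_gt0; apply/set0Pn; exists w; by rewrite inE hw hwC.
  have := leq_trans lo (leq_trans (eq_leq (esym dc)) (leq_trans up hCB)).
  by rewrite leq_add2l.
exists (fun x => x \in C) => e; rewrite !inE => /andP [hnD hE] u v hu hv huv.
have he := @two_set _ e u v (hG e hE) hu hv huv.
case: (hvc e hE) => w hw hwC.
move: hnD; rewrite hE /= he; apply: contra => /eqP hc.
apply/subsetP => x; rewrite !inE => /orP [] /eqP ->.
- case hu': (u \in C) => //; move: hc; rewrite hu' => hv'.
  move: hw; rewrite he !inE => /orP [] /eqP hx; subst w; [by rewrite hu' in hwC|by rewrite -hv' in hwC].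
- case hv': (v \in C) => //; move: hc; rewrite hv' => hu'.
  move: hw; rewrite he !inE => /orP [] /eqP hx; subst w; [by rewrite hu' in hwC|by rewrite hv' in hwC].
Qed.
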